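(* If $G$ is a graph with no component of order exactly $2$, then $\gamma(S_2(G))=\gamma_{\rm cer}(S_2(G))$.
   Context: All graphs are finite and simple. The $2$-subdivision $S_2(G)$ of $G$ is obtained from $G$ by replacing each edge $e=uv$ by a path $u,u_e,v_e,v$, where $u_e,v_e$ are two new vertices. A set $D\subseteq V_G$ is a dominating set of $G$ if every vertex of $V_G-D$ has a neighbor in $D$; $\gamma(G)$ is the minimum cardinality of a dominating set. A set $D\subseteq V_G$ is a certified dominating set of $G$ if $D$ is a dominating set of $G$ and every vertex of $D$ has either zero or at least two neighbors in $V_G-D$; $\gamma_{\rm cer}(G)$ is the minimum cardinality of a certified dominating set. *)

(* Defs.v *)
From mathcomp Require Import all_boot.
Set Implicit Arguments. Unset Strict Implicit. Unset Printing Implicit Defensive.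

Definition simple_graph (T : finType) (e : rel T) : Prop :=
  symmetric e /\ irreflexive e.

Definition nbhd (T : finType) (e : rel T) (x : T) : {set T} := [set y | e x y].

Definition dominating (T : finType) (e : rel T) (D : {set T}) : bool :=
  [forall x, (x \notin D) ==> [exists y in D, e x y]].

Definition certified_dominating (T : finType) (e : rel T) (D : {set T}) : bool :=
  dominating e D &&
  [forall x in D, (#|nbhd e x :\: D| == 0) || (2 <= #|nbhd e x :\: D|)].

(* gamma(G): minimum cardinality of a dominating set (V itself is one). *)
Definition gamma (T : finType) (e : rel T) : nat :=
  \big[minn/#|T|]_(D : {set T} | dominating e D) #|D|.

Definition gamma_cer (T : finType) (e : rel T) : nat :=
  \big[minn/#|T|]_(D : {set T} | certified_dominating e D) #|D|.

(* For an edge e = uv, the subdivision vertex u_e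
   (adjacent to u) is represented by the ordered pair (u,v) with e u v,
   and v_e by (v,u). *)
Definition sub2_vertex (T : finType) (e : rel T) : finType :=
  (T + {p : T * T | e p.1 p.2})%type.

Definition sub2_adj (T : finType) (e : rel T) : rel (sub2_vertex e) :=
  fun a b =>
    match a, b with
    | inl x, inl y => false
    | inl x, inr p => (val p).1 == x
    | inr p, inl y => (val p).1 == y
    | inr p, inr q => ((val q).1 == (val p).2) && ((val q).2 == (val p).1)
    end.

Definition no_component_of_order2 (T : finType) (e : rel T) : Prop :=
  forall x : T, #|[set y | connect e x y]| != 2.

(* Main.v *)
Require Import Defs.
From mathcomp Require Import all_boot zify.
Set Implicit Arguments. Unset Strict Implicit. Unset Printing Implicit Defensive.

Lemma bigmin_le (I : finType) (P : pred I) (F : I -> nat) a i :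
  P i -> \big[minn/a]_(j | P j) F j <= F i.
Proof.
move=> Pi; have : i \in index_enum I by rewrite mem_index_enum.
elim: (index_enum I) => //= j s IH; rewrite inE big_cons.
case/orP => [/eqP <-|/IH h]; first by rewrite Pi geq_minl.
by case: (P j) => //; rewrite geq_min h orbT.
Qed.

Lemma bigmin_ge (I : finType) (P : pred I) (F : I -> nat) a c :
  (forall i, P i -> c <= F i) -> c <= a -> c <= \big[minn/a]_(j | P j) F j.
Proof.
move=> H Ha; elim/big_ind: _ => // x y hx hy; by rewrite leq_min hx hy.
Qed.

Lemma dom_swap (V : finType) (r : rel V) (D : {set V}) x z :
  dominating r D ->
  (forall y, y \notin z |: (D :\ x) -> (y == x) || r y x ->
     exists2 w, w \in z |: (D :\ x) & r y w) ->
  dominating r (z |: (D :\ x)).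
Proof.
move=> /forallP hD H; apply/forallP => y; apply/implyP => hy.
apply/exists_inP.
case hyx: ((y == x) || r y x); first exact: H.
have yD : y \notin D.
  move: hy; rewrite !inE negb_or => /andP[_]; rewrite negb_and negbK.
  by case/orP=> // /eqP yx; move: hyx; rewrite yx eqxx.
have /exists_inP[w wD ryw] := implyP (hD y) yD.
exists w => //; rewrite !inE wD andbT; apply/orP; right.
by apply/eqP => wx; move: hyx; rewrite -wx ryw orbT.
Qed.

Lemma swap_improve (V : finType) (P D : {set V}) x z :
  x \in D -> z != x -> (z \in D) || ((x \notin P) && (z \in P)) ->
  (#|z |: (D :\ x)| < #|D|) \/
  (#|z |: (D :\ x)| = #|D| /\ #|(z |: (D :\ x)) :\: P| < #|D :\: P|).
Proof.
move=> xD zx H.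
rewrite (cardsD1 x D) xD cardsU1.
case zD: (z \in D).
  have -> : z \in D :\ x by rewrite !inE zD zx.
  left => /=; lia.
move: H; rewrite zD /= => /andP[xP zP].
have -> : z \notin D :\ x by rewrite !inE zD andbF.
right; split; first by [].
have -> : (z |: (D :\ x)) :\: P = (D :\: P) :\ x.
  apply/setP => w; rewrite !inE.
  case: (eqVneq w z) => [->|]; first by rewrite zP zx.
  by move=> _; case: (w \in P); case: (w != x); case: (w \in D).
rewrite [#|D :\: P|](cardsD1 x) !inE xD xP /=; lia.
Qed.

Definition deg1 (T : finType) (e : rel T) (u : T) : bool :=
  #|nbhd ((@sub2_adj T e)) (inl u)| == 1.

Definition Pset (T : finType) (e : rel T) : {set sub2_vertex e} :=
  [set x | match x with inl u => ~~ deg1 e u | inr p => deg1 e (val p).1 end].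

Lemma deg1_uniq (T : finType) (e : rel T) u (a b : sub2_vertex e) :
  deg1 e u -> (@sub2_adj T e) (inl u) a -> (@sub2_adj T e) (inl u) b -> a = b.
Proof.
move=> /cards1P[c hc] ha hb.
have : a \in nbhd ((@sub2_adj T e)) (inl u) by rewrite inE.
have : b \in nbhd ((@sub2_adj T e)) (inl u) by rewrite inE.
by rewrite hc !inE => /eqP -> /eqP ->.
Qed.

Lemma comp2 (T : finType) (e : rel T) : symmetric e -> irreflexive e ->
  forall (p : {p : T * T | e p.1 p.2}), deg1 e (val p).1 -> deg1 e (val p).2 ->
  #|[set y | connect e (val p).1 y]| = 2.
Proof.
move=> hs hi [[a b] hab] /= da db.
have ea : forall w, e a w -> w = b.
  move=> w h.
  have := @deg1_uniq T e a (inr (exist (fun p : T * T => e p.1 p.2) (a, w) h))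
            (inr (exist (fun p : T * T => e p.1 p.2) (a, b) hab)) da.
  by rewrite /= eqxx => /(_ isT isT) [].
have hba : e b a by rewrite hs.
have eb : forall w, e b w -> w = a.
  move=> w h.
  have := @deg1_uniq T e b (inr (exist (fun p : T * T => e p.1 p.2) (b, w) h))
            (inr (exist (fun p : T * T => e p.1 p.2) (b, a) hba)) db.
  by rewrite /= eqxx => /(_ isT isT) [].
have ab : a != b by apply/eqP => eab; move: hab; rewrite eab hi.
have -> : [set y | connect e a y] = [set a; b].
  apply/setP => y; rewrite !inE; apply/idP/idP.
    have cl : closed e [set a; b].
      move=> x z hxz; rewrite !inE.
      case: (eqVneq x a) => [xa|xa]; first by rewrite xa in hxz; rewrite (ea _ hxz) eqxx orbT.
      case: (eqVneq x b) => [xb|xb]; first by rewrite xb in hxz; rewrite (eb _ hxz) eqxx.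
      case: (eqVneq z a) => [za|za].
        by rewrite za hs in hxz; move: xb; rewrite (ea _ hxz) eqxx.
      case: (eqVneq z b) => [zb|zb] //.
      by rewrite zb hs in hxz; move: xa; rewrite (eb _ hxz) eqxx.
    by move/(closed_connect cl); rewrite !inE eqxx /= => <-.
  case/orP => /eqP ->; first exact: connect0.
  exact: connect1.
by rewrite cards2 ab.
Qed.

Lemma domA (T : finType) (e : rel T) (D : {set sub2_vertex e}) u q :
  deg1 e u -> (val q).1 = u -> dominating (@sub2_adj T e) D ->
  dominating (@sub2_adj T e) (inr q |: (D :\ inl u)).
Proof.
move=> du hq hD; apply: dom_swap => // y hy /orP[/eqP ->|hyu].
  by exists (inr q); rewrite ?inE ?eqxx //= hq eqxx.
have : y = inr q.
  apply: (deg1_uniq du); last by rewrite /= hq eqxx.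
  by case: y hy hyu.
by move=> yq; move: hy; rewrite yq !inE eqxx.
Qed.

Lemma domB1 (T : finType) (e : rel T) (D : {set sub2_vertex e}) q :
  inl (val q).1 \in D -> dominating (@sub2_adj T e) D ->
  dominating (@sub2_adj T e) (inl (val q).2 |: (D :\ inr q)).
Proof.
move=> uD hD; apply: dom_swap => // y hy /orP[/eqP ->|hyu].
  by exists (inl (val q).1); rewrite ?inE ?uD ?orbT //= eqxx.
case: y hy hyu => [c|q'] hy /=.
  by move=> /eqP hc; move: hy; rewrite -hc !inE uD /= ?orbT.
case/andP => /eqP h1 /eqP h2.
by exists (inl (val q).2); rewrite ?inE ?eqxx //= h2.
Qed.

Lemma domB2 (T : finType) (e : rel T) (D : {set sub2_vertex e}) q r :
  val r = ((val q).2, (val q).1) ->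
  inl (val q).1 \in D -> dominating (@sub2_adj T e) D ->
  dominating (@sub2_adj T e) (inr r |: (D :\ inr q)).
Proof.
move=> hr uD hD; apply: dom_swap => // y hy /orP[/eqP ->|hyu].
  by exists (inl (val q).1); rewrite ?inE ?uD ?orbT //= eqxx.
case: y hy hyu => [c|q'] hy /=.
  by move=> /eqP hc; move: hy; rewrite -hc !inE uD /= ?orbT.
case/andP => /eqP h1 /eqP h2.
have qr : q' = r.
  apply: val_inj; rewrite hr h1 h2; exact: surjective_pairing.
by move: hy; rewrite qr !inE eqxx.
Qed.

Lemma domC (T : finType) (e : rel T) (D : {set sub2_vertex e}) q r :
  val r = ((val q).2, (val q).1) -> (val q).1 != (val q).2 ->
  inr r \in D -> dominating (@sub2_adj T e) D ->
  dominating (@sub2_adj T e) (inl (val q).1 |: (D :\ inr q)).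
Proof.
move=> hr hne rD hD; apply: dom_swap => // y hy /orP[/eqP ->|hyu].
  by exists (inl (val q).1); rewrite ?inE ?eqxx //= eqxx.
case: y hy hyu => [c|q'] hy /=.
  by move=> /eqP hc; move: hy; rewrite -hc !inE eqxx.
case/andP => /eqP h1 /eqP h2.
have qr : q' = r by apply: val_inj; rewrite hr h1 h2; exact: surjective_pairing.
move: hy; rewrite qr !inE rD andbT negb_or => /andP[_ /negP []].
apply/eqP => h; have : val r = val q by case: h => ->.
rewrite hr; case: (val q) hne => a b /= hne [ha _]; by rewrite ha eqxx in hne.
Qed.

Definition good_swap (T : finType) (e : rel T) (D : {set sub2_vertex e}) x' z :=
  [/\ x' \in D, z != x', (z \in D) || ((x' \notin Pset e) && (z \in Pset e))
    & dominating (@sub2_adj T e) (z |: (D :\ x'))].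

Lemma neqP (T : finType) (e : rel T) (x z : sub2_vertex e) :
  x \notin Pset e -> z \in Pset e -> z != x.
Proof. by move=> hx hz; apply/eqP => h; move: hz; rewrite h (negbTE hx). Qed.

Lemma L1 (T : finType) (e : rel T) : symmetric e ->
  forall (D : {set sub2_vertex e}) u q, dominating (@sub2_adj T e) D ->
  inl u \in D -> inr q \in D -> (val q).1 = u -> exists x' z, good_swap D x' z.
Proof.
move=> hs D u q hD uD qD hq.
case du: (deg1 e u).
  exists (inl u), (inr q); split => //; first by rewrite qD.
  exact: domA.
have hq2 : e (val q).2 (val q).1 by rewrite hs; exact: (valP q).
set r := exist (fun p : T * T => e p.1 p.2) ((val q).2, (val q).1) hq2.
have xP : inr q \notin Pset e by rewrite inE /= hq du.
have uD' : inl (val q).1 \in D by rewrite hq.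
case d2: (deg1 e (val q).2).
  have zP : inr r \in Pset e by rewrite inE /= d2.
  exists (inr q), (inr r); split => //; first exact: neqP.
    by rewrite xP zP orbT.
  exact: domB2.
have zP : inl (val q).2 \in Pset e by rewrite inE /= d2.
exists (inr q), (inl (val q).2); split => //; first by rewrite xP zP orbT.
exact: domB1.
Qed.

Lemma step (T : finType) (e : rel T) : symmetric e -> irreflexive e ->
  no_component_of_order2 e ->
  forall (D : {set sub2_vertex e}) x, dominating (@sub2_adj T e) D -> x \in D ->
  #|nbhd (@sub2_adj T e) x :\: D| = 1 -> exists x' z, good_swap D x' z.
Proof.
move=> hs hi hno D x hD xD /eqP /cards1P [y hy].
have mem : forall w, (w \in nbhd (@sub2_adj T e) x :\: D) = (w == y).
  by move=> w; rewrite hy inE.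
case: x xD hy mem => [u|p] xD hy mem.
  case: (boolP [exists w in D, @sub2_adj T e (inl u) w]).
    case/exists_inP => w wD hw; case: w wD hw => [c|q] // wD /= /eqP hq.
    exact: (L1 hs hD xD wD hq).
  move/exists_inPn => H.
  have hn : nbhd (@sub2_adj T e) (inl u) = [set y].
    apply/setP => w; rewrite [w \in [set y]]inE -mem !inE.
    case h: (@sub2_adj T e (inl u) w); rewrite ?andbF ?andbT //.
    by case wD: (w \in D) => //; have := H w wD; rewrite h.
  have du : deg1 e u by rewrite /deg1 hn cards1.
  have : y \in nbhd (@sub2_adj T e) (inl u) by rewrite hn set11.
  rewrite inE; case: y {hy mem hn} => [c|q] //= /eqP hq.
  exists (inl u), (inr q); split => //.
    by rewrite !inE /= hq du orbT.
  exact: domA.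
set a := (val p).1; set b := (val p).2.
case aD: (inl a \in D).
  exact: (L1 hs hD aD xD).
have hya : inl a == y by rewrite -mem !inE aD /= eqxx.
have hba : e b a by rewrite hs; exact: (valP p).
set r := exist (fun p : T * T => e p.1 p.2) (b, a) hba.
have rD : inr r \in D.
  apply: contraT => rD; have := mem (inr r); rewrite !inE rD /= !eqxx /=.
  by move/esym/eqP => ry; move: hya; rewrite -ry.
have ab : a != b by apply/eqP => eab; have := valP p; rewrite /= -/a -/b eab hi.
case da: (deg1 e a).
  case db: (deg1 e b).
    by have := hno a; rewrite (comp2 hs hi da db).
  have zP : inl b \in Pset e by rewrite inE /= db.
  have xP : inr r \notin Pset e by rewrite inE /= db.
  exists (inr r), (inl b); split => //; first by rewrite xP zP orbT.
  apply: (@domC T e D r p) => //; first by rewrite /= /a /b; exact: surjective_pairing.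
  by rewrite eq_sym.
have zP : inl a \in Pset e by rewrite inE /= da.
have xP : inr p \notin Pset e by rewrite inE /= da.
exists (inr p), (inl a); split => //; first by rewrite xP zP orbT.
exact: (@domC T e D p r).
Qed.

Lemma key (T : finType) (e : rel T) : symmetric e -> irreflexive e ->
  no_component_of_order2 e ->
  forall (D : {set sub2_vertex e}), dominating (@sub2_adj T e) D ->
  exists2 D', certified_dominating (@sub2_adj T e) D' & #|D'| <= #|D|.
Proof.
move=> hs hi hno.
set K := #|sub2_vertex e|.+1.
pose m (D : {set sub2_vertex e}) := #|D| * K + #|D :\: Pset e|.
move=> D; move: {2}(m D).+1 (ltnSn (m D)) => n; elim: n D => // n IH D hm hD.
case hc: (certified_dominating (@sub2_adj T e) D); first by exists D.
have [x xD hx] : exists2 x, x \in D & #|nbhd (@sub2_adj T e) x :\: D| = 1.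
  move: hc; rewrite /certified_dominating hD /= => /forall_inPn [x xD hx].
  exists x => //; move: hx; rewrite negb_or -leqNgt => /andP[h0 h1]; lia.
have [x' [z [x'D zx hz hdom]]] := step hs hi hno hD xD hx.
have hK : forall A : {set sub2_vertex e}, #|A| < K by move=> A; rewrite ltnS max_card.
have hlt : m (z |: (D :\ x')) < m D.
  case: (@swap_improve _ (Pset e) D x' z x'D zx hz) => [hlt|[heq hlt]].
    have h1 := hK ((z |: (D :\ x')) :\: Pset e).
    have h2 : #|z |: (D :\ x')|.+1 * K <= #|D| * K by rewrite leq_mul2r hlt orbT.
    rewrite /m; move: h1 h2; rewrite mulSn; lia.
  by rewrite /m heq; lia.
have [D'' hc'' hle] := IH (z |: (D :\ x')) (leq_trans hlt hm) hdom.
exists D'' => //; apply: (leq_trans hle).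
case: (@swap_improve _ (Pset e) D x' z x'D zx hz) => [/ltnW|[-> _]] //.
Qed.

Theorem corollary2p14 (T : finType) (e : rel T) :
  simple_graph e -> no_component_of_order2 e ->
  gamma (@sub2_adj T e) = gamma_cer (@sub2_adj T e).
Proof.
move=> [hs hi] hno.
have domT : dominating (@sub2_adj T e) setT by apply/forallP => x; rewrite inE.
have cerT : certified_dominating (@sub2_adj T e) setT.
  rewrite /certified_dominating domT /=; apply/forall_inP => x _.
  by rewrite setDT cards0.
apply/eqP; rewrite eqn_leq; apply/andP; split; rewrite /gamma /gamma_cer.
  apply: bigmin_ge.
    by move=> D /andP[hD _]; exact: bigmin_le.
  by rewrite -cardsT; exact: bigmin_le.
apply: bigmin_ge.
  move=> D hD; have [D' hc hle] := key hs hi hno hD.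
  apply: leq_trans _ hle; exact: bigmin_le.
by rewrite -cardsT; exact: bigmin_le.
Qed.
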